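(* Let $G$ be a completable graph and let $A(G)$ and $B(G)$ be $G$-partial positive definite matrices. Then $$\mathfrak{p}^+[A(G)-B(G)]\subset\mathfrak{p}^+[A(G)]-\mathfrak{p}^+[B(G)]:=\{M-N: M\in\mathfrak{p}^+[A(G)],\ N\in\mathfrak{p}^+[B(G)]\}.$$
   Context: A graph $G=(V,E)$ is a finite undirected graph on $V=\{1,\dots,n\}$ containing all loops. A $G$-partial matrix has entries specified exactly for $\{i,j\}\in E$; a completion is an $n\times n$ matrix agreeing with it on $E$. Differences of $G$-partial matrices are taken entrywise on $E$. A $G$-partial matrix $[a_{ij}]_G$ is partial positive definite if $a_{ji}=\overline{a_{ij}}$ on $E$ and every principal submatrix indexed by a clique of $G$ is positive definite. $G$ is completable if every $G$-partial positive semidefinite matrix has a positive semidefinite completion (equivalently $G$ is chordal). $\mathfrak{p}^+[A(G)]$ denotes the set of positive definite completions of $A(G)$. *)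

(* Defs.v *)
From mathcomp Require Import all_boot all_order all_algebra.
Set Implicit Arguments. Unset Strict Implicit. Unset Printing Implicit Defensive.
Import Order.TTheory GRing.Theory Num.Theory.
Local Open Scope ring_scope.

Definition is_graph (n : nat) (e : rel 'I_n) : Prop :=
  (forall i, e i i) /\ (forall i j, e i j = e j i).

(* A G-partial matrix is represented by a full n x n matrix whose entries
   outside the edge set E are irrelevant (never used). *)

Definition ctr (C : numClosedFieldType) (m p : nat) (A : 'M[C]_(m, p)) : 'M[C]_(p, m) :=
  map_mx Num.conj (A^T).

Definition hermitian (C : numClosedFieldType) (m : nat) (A : 'M[C]_m) : Prop :=
  ctr A = A.

Definition posdef (C : numClosedFieldType) (m : nat) (A : 'M[C]_m) : Prop :=
  hermitian A /\ forall v : 'cV[C]_m, v != 0 -> 0 < (ctr v *m A *m v) 0 0.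

Definition possemidef (C : numClosedFieldType) (m : nat) (A : 'M[C]_m) : Prop :=
  hermitian A /\ forall v : 'cV[C]_m, 0 <= (ctr v *m A *m v) 0 0.

Definition clique (n : nat) (e : rel 'I_n) (S : {set 'I_n}) : Prop :=
  forall i j, i \in S -> j \in S -> e i j.

Definition principal_sub (C : numClosedFieldType) (n : nat) (S : {set 'I_n})
  (A : 'M[C]_n) : 'M[C]_#|S| :=
  mxsub (@enum_val _ (mem S)) (@enum_val _ (mem S)) A.

Definition partial_hermitian (C : numClosedFieldType) (n : nat) (e : rel 'I_n)
  (A : 'M[C]_n) : Prop :=
  forall i j, e i j -> A j i = Num.conj (A i j).

Definition partial_posdef (C : numClosedFieldType) (n : nat) (e : rel 'I_n)
  (A : 'M[C]_n) : Prop :=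
  partial_hermitian e A /\
  forall S : {set 'I_n}, clique e S -> posdef (principal_sub S A).

Definition partial_possemidef (C : numClosedFieldType) (n : nat) (e : rel 'I_n)
  (A : 'M[C]_n) : Prop :=
  partial_hermitian e A /\
  forall S : {set 'I_n}, clique e S -> possemidef (principal_sub S A).

Definition completion (C : numClosedFieldType) (n : nat) (e : rel 'I_n)
  (A M : 'M[C]_n) : Prop :=
  forall i j, e i j -> M i j = A i j.

Definition completable (C : numClosedFieldType) (n : nat) (e : rel 'I_n) : Prop :=
  forall A : 'M[C]_n, partial_possemidef e A ->
    exists M : 'M[C]_n, completion e A M /\ possemidef M.

Definition pd_completions (C : numClosedFieldType) (n : nat) (e : rel 'I_n)
  (A : 'M[C]_n) : 'M[C]_n -> Prop :=
  fun M => completion e A M /\ posdef M.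

(* Main.v *)
From Pilot Require Import Defs.
From mathcomp Require Import all_boot all_order all_algebra.
From mathcomp Require Import sesquilinear spectral.
From Stdlib Require Import Classical.
Import Pilot.Defs.
Import Order.TTheory GRing.Theory Num.Theory.
Local Open Scope ring_scope.
Set Implicit Arguments. Unset Strict Implicit.

Section Q.
Variable C : numClosedFieldType.

Definition qf m (X : 'M[C]_m) (v : 'cV[C]_m) : C := (ctr v *m X *m v) 0 0.

Lemma ctr_mul m p q (A : 'M[C]_(m, p)) (B : 'M[C]_(p, q)) :
  ctr (A *m B) = ctr B *m ctr A.
Proof. by rewrite /ctr trmx_mul map_mxM. Qed.

Lemma ctrK m p (A : 'M[C]_(m, p)) : ctr (ctr A) = A.
Proof. by apply/matrixP => i j; rewrite !mxE conjCK. Qed.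

Lemma ctrD m p (A B : 'M[C]_(m, p)) : ctr (A + B) = ctr A + ctr B.
Proof. by apply/matrixP => i j; rewrite !mxE rmorphD. Qed.

Lemma ctrB m p (A B : 'M[C]_(m, p)) : ctr (A - B) = ctr A - ctr B.
Proof. by apply/matrixP => i j; rewrite !mxE rmorphB. Qed.

Lemma ctr_scalar m (a : C) : ctr (a%:M : 'M_m) = (a^*)%:M.
Proof.
apply/matrixP => i j; rewrite !mxE.
by rewrite rmorphMn eq_sym.
Qed.

Lemma qfD m (X Y : 'M[C]_m) v : qf (X + Y) v = qf X v + qf Y v.
Proof. by rewrite /qf mulmxDr mulmxDl mxE. Qed.

Lemma qfB m (X Y : 'M[C]_m) v : qf (X - Y) v = qf X v - qf Y v.
Proof. by rewrite /qf mulmxBr mulmxBl !mxE. Qed.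

Lemma qf_scalar m (a : C) (v : 'cV[C]_m) : qf a%:M v = a * qf 1%:M v.
Proof. by rewrite /qf mul_mx_scalar -scalemxAl mxE mulmx1. Qed.

Lemma qf1 m (v : 'cV[C]_m) : qf 1%:M v = \sum_i (v i 0)^* * v i 0.
Proof. rewrite /qf mulmx1 !mxE; apply: eq_bigr => i _; by rewrite !mxE. Qed.

Lemma qf1_ge0 m (v : 'cV[C]_m) : 0 <= qf 1%:M v.
Proof. rewrite qf1 sumr_ge0 // => i _; by rewrite -normCKC exprn_ge0. Qed.

Lemma qf1_gt0 m (v : 'cV[C]_m) : v != 0 -> 0 < qf 1%:M v.
Proof.
move=> vn0; rewrite lt_def qf1_ge0 andbT qf1.
have [i vi] : exists i, v i 0 != 0.
  apply/existsP; move: vn0; apply: contraR; rewrite negb_exists => /forallP H.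
  apply/eqP/matrixP => i j; rewrite ord1 mxE; exact/eqP/negPn/H.
have h0 : forall j, 0 <= (v j 0)^* * v j 0 by move=> j; rewrite -normCKC exprn_ge0.
rewrite (bigD1 i) //= paddr_eq0 ?sumr_ge0 //.
by rewrite -normCKC sqrf_eq0 normr_eq0 (negbTE vi).
Qed.

Lemma qf_diag m (d : 'rV[C]_m) w :
  qf (diag_mx d) w = \sum_i d 0 i * ((w i 0)^* * w i 0).
Proof.
rewrite /qf mul_mx_diag !mxE; apply: eq_bigr => i _; rewrite !mxE.
by rewrite mulrAC mulrC mulrA.
Qed.

Lemma qf_conj m (P X : 'M[C]_m) v : qf (ctr P *m X *m P) v = qf X (P *m v).
Proof. by rewrite /qf ctr_mul !mulmxA. Qed.


Lemma common_delta (T : finType) (good : T -> C -> Prop) :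
  (forall t d d', good t d -> 0 < d' -> d' <= d -> good t d') ->
  (forall t, exists2 d, 0 < d & good t d) ->
  exists2 d, 0 < d & forall t, good t d.
Proof.
move=> mono ex.
suff [d d0 H] : exists2 d, 0 < d & forall t, t \in enum T -> good t d.
  by exists d => // t; apply: H; rewrite mem_enum.
elim: (enum T) => [|x s [d2 d20 H2]]; first by exists 1.
have [d1 d10 H1] := ex x.
have r1 : d1 \is Num.real by rewrite gtr0_real.
have r2 : d2 \is Num.real by rewrite gtr0_real.
case: (boolP (d1 <= d2)) => hle.
  exists d1 => // t; rewrite inE => /orP [/eqP -> //|ts].
  exact: mono (H2 t ts) d10 hle.
have hlt : d2 < d1 by rewrite real_ltNge.
exists d2 => // t; rewrite inE => /orP [/eqP ->|ts]; last exact: H2.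
exact: mono H1 d20 (ltW hlt).
Qed.

Lemma pd_shift m (K : 'M[C]_m) : posdef K ->
  exists2 d, 0 < d & forall v, d * qf 1%:M v <= qf K v.
Proof.
case=> hK pK.
have nK : K \is normalmx by apply/normalmxP; change (K *m ctr K = ctr K *m K); rewrite hK.
have /orthomx_spectralP eK0 := nK.
set P := spectralmx K in eK0; set d := spectral_diag K in eK0.
have PU : P *m ctr P = 1%:M by apply/unitarymxP/spectral_unitarymx.
have UP : ctr P *m P = 1%:M := mulmx1C PU.
have eK : K = ctr P *m diag_mx d *m P.
  by rewrite {1}eK0 invmx_unitary // spectral_unitarymx.
have dpos : forall i, 0 < d 0 i.
  move=> i; set u := ctr P *m delta_mx i (0 : 'I_1).
  have un0 : u != 0.
    apply/eqP => u0; have : P *m u = 0 by rewrite u0 mulmx0.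
    rewrite /u mulmxA PU mul1mx => /matrixP /(_ i 0).
    by rewrite !mxE !eqxx /= => /eqP; rewrite oner_eq0.
  have := pK u un0; change (0 < qf K u -> 0 < d 0 i).
  rewrite eK qf_conj /u mulmxA PU mul1mx qf_diag (bigD1 i) //= big1 ?addr0.
    by rewrite !mxE !eqxx /= rmorph1 !mulr1.
  by move=> j ji; rewrite !mxE (negbTE ji) /= rmorph0 !mulr0.
have [δ δpos δle] := @common_delta 'I_m (fun i δ => δ <= d 0 i)
   (fun t x y h _ h2 => le_trans h2 h) (fun i => ex_intro2 _ _ (d 0 i) (dpos i) (lexx _)).
exists δ => // v.
have -> : qf 1%:M v = qf 1%:M (P *m v) by rewrite -qf_conj mulmx1 UP.
rewrite eK qf_conj qf_diag qf1 mulr_sumr; apply: ler_sum => i _.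
by rewrite ler_wpM2r // -normCKC exprn_ge0.
Qed.

End Q.

Lemma posdefP (C : numClosedFieldType) m (X : 'M[C]_m) :
  posdef X <-> hermitian X /\ forall v, v != 0 -> 0 < qf X v.
Proof. by []. Qed.

Theorem lemma5p4 (C : numClosedFieldType) (n : nat) (e : rel 'I_n)
  (A B : 'M[C]_n) :
  is_graph e -> completable C e ->
  partial_posdef e A -> partial_posdef e B ->
  forall M : 'M[C]_n, pd_completions e (A - B) M ->
    exists P Q : 'M[C]_n,
      pd_completions e A P /\ pd_completions e B Q /\ M = P - Q.
Proof.
move=> _ hcomp _ [hBh hBpd] M [hM /posdefP [hMh pM]].
have [δ δpos δle] := @common_delta C {set 'I_n}
  (fun S δ => clique e S -> forall v, δ * qf 1%:M v <= qf (principal_sub S B) v)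
  (fun S x y h y0 yx cS v => le_trans (ler_wpM2r (qf1_ge0 v) yx) (h cS v))
  (fun S => match classic (clique e S) with
            | or_introl cS => let: ex_intro2 d d0 H := pd_shift (hBpd S cS) in
                              ex_intro2 _ _ d d0 (fun _ => H)
            | or_intror ncS => ex_intro2 _ _ 1 ltr01 (fun cS => match ncS cS with end)
            end).
have δc : δ^* = δ by rewrite geC0_conj // ltW.
have hB' : partial_possemidef e (B - δ%:M).
  split.
    move=> i j eij; rewrite !mxE hBh // rmorphB rmorphMn eq_sym.
    by congr (_ - _ *+ _); exact/esym/δc.
  move=> S cS.
  have -> : principal_sub S (B - δ%:M) = principal_sub S B - δ%:M.
    apply/matrixP => i j; rewrite !mxE (inj_eq enum_val_inj) //.
  have [hKh _] := hBpd S cS.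
  split; first by rewrite /hermitian ctrB ctr_scalar hKh δc.
  move=> v; change (0 <= qf (principal_sub S B - δ%:M) v).
  by rewrite qfB qf_scalar subr_ge0 δle.
have [Q0 [hQ0 [hQ0h pQ0]]] := hcomp _ hB'.
have pdQ : posdef (Q0 + δ%:M).
  apply/posdefP; split; first by rewrite /hermitian ctrD ctr_scalar hQ0h δc.
  move=> v vn0; rewrite qfD qf_scalar.
  apply: (lt_le_trans (mulr_gt0 δpos (qf1_gt0 vn0))).
  by rewrite lerDr; apply: pQ0.
exists (M + (Q0 + δ%:M)), (Q0 + δ%:M).
split; last split; last by rewrite addrK.
- split.
    move=> i j eij; rewrite !mxE (hM i j eij) (hQ0 i j eij) !mxE.
    by rewrite subrK subrK.
  move: pdQ => /posdefP [hQh pQ]; apply/posdefP; split.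
    by rewrite /hermitian ctrD hMh hQh.
  by move=> v vn0; rewrite qfD addr_gt0 // ?pM ?pQ.
- split => // i j eij; rewrite !mxE (hQ0 i j eij) !mxE subrK //.
Qed.
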